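(* Let $\mathcal{G}$ be a DAG and let $\mathbf{A}$ and $\mathbf{B}$ be disjoint vertex sets. Then there exists a unique subset $\mathbf{C}$ of $\mathbf{B}$ such that $\mathbf{A}\perp\!\!\!\perp_{\mathcal{G}}\mathbf{B}\setminus\mathbf{C}\mid\mathbf{C}$ and such that no strict subset $\mathbf{C}'$ of $\mathbf{C}$ satisfies $\mathbf{A}\perp\!\!\!\perp_{\mathcal{G}}\mathbf{B}\setminus\mathbf{C}'\mid\mathbf{C}'$.
   Context: $\mathbf{U}\perp\!\!\!\perp_{\mathcal{G}}\mathbf{W}\mid\mathbf{Z}$ denotes d-separation in the DAG $\mathcal{G}$ (with the convention that the statement is trivially true when $\mathbf{W}=\emptyset$). *)

(* Defs.v *)
From mathcomp Require Import all_boot.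
Set Implicit Arguments. Unset Strict Implicit. Unset Printing Implicit Defensive.

Section DSep.
Variable V : finType.
Variable e : rel V.

(* acyclicity: no edge x -> y with a directed path back from y to x
   (this also rules out self-loops, since connect is reflexive) *)
Definition dag : Prop := forall x y, e x y -> ~~ connect e y x.

Definition adj (x y : V) : bool := e x y || e y x.

Definition desc (x y : V) : bool := connect e x y.

Definition blocks_triple (Z : {set V}) (x y z : V) : bool :=
  if e x y && e z y then ~~ [exists w in Z, desc y w] else y \in Z.

Definition blocked (Z : {set V}) (p : seq V) : Prop :=
  exists (p1 p2 : seq V) (x y z : V),
    p = p1 ++ [:: x; y; z] ++ p2 /\ blocks_triple Z x y z.

(* d-separation  A _||_ W | Z : every path (sequence of distinct vertices,
   consecutive ones adjacent) from a vertex in A to a vertex in W is blocked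
   by Z.  Trivially true when W (or A) is empty. *)
Definition dsep (A W Z : {set V}) : Prop :=
  forall (a : V) (s : seq V), a \in A -> last a s \in W ->
    uniq (a :: s) -> path adj a s -> blocked Z (a :: s).

End DSep.

(* Main.v *)
Require Import Defs.
From mathcomp Require Import all_boot.
From Stdlib Require Import Classical.

Lemma mid_in (V : eqType) (p1 p2 l : seq V) (x y z b : V) :
  p1 ++ [:: x, y, z & p2] = rcons l b -> y \in l.
Proof.
elim: p1 l => [|c p1 IH] [|u l] //=.
- case: l => [|v l] /=; first by case.
  by case=> _ ->; rewrite !inE eqxx orbT.
- by case: p1 {IH} => [|? [|? ?]].
- by case=> _ /IH H; rewrite inE H orbT.
Qed.

Lemma split_first (V : eqType) (P : pred V) (s : seq V) :
  has P s -> exists r b t, s = r ++ b :: t /\ all (predC P) r /\ P b.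
Proof.
elim: s => [|u s IH] //= /orP [Pu|/IH [r [b [t [-> [Hr Pb]]]]]].
- by exists [::], u, s.
- case Pu: (P u).
  + by exists [::], u, (r ++ b :: t).
  + by exists (u :: r), b, t; rewrite /= Pu.
Qed.

Lemma blocked_cat (V : finType) (e : rel V) (D : {set V}) p t :
  blocked e D p -> blocked e D (p ++ t).
Proof.
move=> [p1 [p2 [x [y [z [-> H]]]]]].
exists p1, (p2 ++ t), x, y, z; split => //.
by rewrite -!catA.
Qed.

Lemma open_trunc (V : finType) (e : rel V) (A B C D : {set V})
  (HAB : [disjoint A & B]) (DC : D \subset C) (CB : C \subset B)
  (HC : dsep e A (B :\: C) C) a r b :
  a \in A -> b \in B :\: C -> all (fun v => v \notin B :\: D) r ->
  uniq (a :: rcons r b) -> path (adj e) a (rcons r b) ->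
  blocked e D (a :: rcons r b).
Proof.
move=> aA bBC Hr Hu Hp.
have := HC a (rcons r b) aA; rewrite last_rcons => /(_ bBC Hu Hp).
move=> [p1 [p2 [x [y [z [Heq Hb]]]]]].
exists p1, p2, x, y, z; split => //.
move: Hb; rewrite /blocks_triple; case: ifP => _.
- apply: contra => /existsP [w /andP [wD dw]].
  by apply/existsP; exists w; rewrite (subsetP DC) ?dw.
- move=> yC.
  have yB : y \in B by apply: (subsetP CB).
  have : y \in a :: r by apply: (@mid_in _ p1 p2 (a :: r) x y z b); rewrite -Heq.
  rewrite inE => /orP [/eqP ya|yr].
  + by move: HAB; rewrite disjoint_subset => /subsetP /(_ a aA);
       rewrite inE -ya yB.
  + move/allP: Hr => /(_ y yr); rewrite !inE yB andbT negbK; exact.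
Qed.

Arguments open_trunc {V e A B C D}.

Lemma dsep_inter (V : finType) (e : rel V) (A B C1 C2 : {set V})
  (HAB : [disjoint A & B]) (C1B : C1 \subset B) (C2B : C2 \subset B)
  (H1 : dsep e A (B :\: C1) C1) (H2 : dsep e A (B :\: C2) C2) :
  dsep e A (B :\: (C1 :&: C2)) (C1 :&: C2).
Proof.
move=> a s aA Hl Hu Hp.
have aB : a \notin B.
  by move: HAB; rewrite disjoint_subset => /subsetP /(_ a aA); rewrite inE.
have Hs : has (fun v => v \in B :\: (C1 :&: C2)) s.
  case: s Hl {Hu Hp} => [|u s] Hl.
    by move: Hl; rewrite /= inE (negbTE aB) andbF.
  by apply/hasP; exists (last u s); rewrite ?mem_last.
have [r [b [t [Hst [Hr Hb]]]]] := @split_first _ _ _ Hs.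
have Heq : a :: s = (a :: rcons r b) ++ t by rewrite Hst /= cat_rcons.
rewrite Heq; apply: blocked_cat.
move: Hu Hp; rewrite Heq cat_uniq => /andP [Hu _].
rewrite Hst -cat_rcons cat_path => /andP [Hp _].
have Hr' : all (fun v => v \notin B :\: (C1 :&: C2)) r.
  by apply/allP => v /(allP Hr).
move: Hb; rewrite /= !inE => /andP [Hn bB].
case b1 : (b \in C1) Hn => /= Hn.
- apply: (open_trunc HAB _ C2B H2) => //; first exact: subsetIr.
  by rewrite !inE Hn bB.
- apply: (open_trunc HAB _ C1B H1) => //; first exact: subsetIl.
  by rewrite !inE b1 bB.
Qed.

Arguments dsep_inter {V e A B C1 C2}.

Theorem lemma7 (V : finType) (e : rel V) (Hdag : dag e) (A B : {set V})
    (HAB : [disjoint A & B]) :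
  exists! C : {set V},
    C \subset B /\ dsep e A (B :\: C) C /\
    (forall C' : {set V}, C' \proper C -> ~ dsep e A (B :\: C') C').
Proof.
have ex : forall n (C : {set V}), #|C| <= n -> C \subset B ->
    dsep e A (B :\: C) C ->
    exists C0 : {set V}, C0 \subset B /\ dsep e A (B :\: C0) C0 /\
    (forall C' : {set V}, C' \proper C0 -> ~ dsep e A (B :\: C') C').
  elim=> [|n IH] C Hn CB HC.
  - exists C; split=> //; split=> // C' /properP [_ [x xC _]].
    by move: Hn; rewrite leqn0 cards_eq0 => /eqP Ce; rewrite Ce inE in xC.
  - destruct (classic (exists C' : {set V}, C' \proper C /\ dsep e A (B :\: C') C'))
      as [[C' [HP HC']]|Hno].
    + apply: (IH C') => //.
        by rewrite -ltnS; apply: leq_trans (proper_card HP) Hn.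
      by apply: subset_trans CB; apply: proper_sub.
    + exists C; split=> //; split=> // C' HP HC'; apply: Hno; by exists C'.
have HB : dsep e A (B :\: B) B.
  by move=> a s _; rewrite setDv inE.
have [C0 [C0B [H0 Hm0]]] := ex _ B (leqnn _) (subxx _) HB.
exists C0; split=> [|C [CB [HC HmC]]]; first by [].
have HI := dsep_inter HAB C0B CB H0 HC.
have E0 : C0 :&: C = C0.
  apply/eqP; rewrite eqEproper subsetIl /=; apply/negP => HP.
  exact: Hm0 _ HP HI.
have E1 : C0 :&: C = C.
  apply/eqP; rewrite eqEproper subsetIr /=; apply/negP => HP.
  exact: HmC _ HP HI.
by rewrite -E1 E0.
Qed.
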